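(* Let $K\ge1$, $N$ and $s$ be integers with $0\le s<N-2$, let $X_0,\dots,X_{K-1}\in\mathbb{R}$, let $f:\mathbb{R}\to\mathbb{R}$, let $\alpha_i=\cos\frac{(2i+1)\pi}{2K}$ for $i=0,\dots,K-1$, define $$u(z)=\sum_{i=0}^{K-1}\frac{(-1)^i/(z-\alpha_i)}{\sum_{j=0}^{K-1}(-1)^j/(z-\alpha_j)}X_i$$ (extended continuously by $u(\alpha_i)=X_i$), and let $g(z)=f(u(z))$, assumed to have a continuous second derivative on $[-1,1]$. Let $\mathcal{F}\subset\{0,\dots,N\}$ with $|\mathcal F|=N+1-s$, let $n=N-s$, let $z_0>\dots>z_n$ be the points $\{\cos\frac{j\pi}{N}:j\in\mathcal F\}$, and let $$r_{\mathcal F}(z)=\sum_{i=0}^{n}\frac{(-1)^i/(z-z_i)}{\sum_{j=0}^n(-1)^j/(z-z_j)}\,g(z_i).$$ Set $R=\frac{(s+1)(s+3)\pi^2}{4}$ and $\|h\|=\max_{z\in[-1,1]}|h(z)|$. Then $$\|r_{\mathcal F}-g\|\le 2(1+R)\sin\Big(\frac{(s+1)\pi}{2N}\Big)\|g''\|$$ if $N-s$ is odd, and $$\|r_{\mathcal F}-g\|\le 2(1+R)\sin\Big(\frac{(s+1)\pi}{2N}\Big)\big(\|g''\|+\|g'\|\big)$$ if $N-s$ is even.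
   Context: $\|h\|$ denotes the maximum norm of a function over $[-1,1]$. The interpolation points $z_j$ are a subset, of size $N+1-s$, of the Chebyshev points of the second kind $\cos\frac{k\pi}{N}$, $k=0,\dots,N$ (the $s$ missing points correspond to straggling workers). *)

(* Defs.v *)
From Stdlib Require Import Reals Lra Lia.
From Coquelicot Require Import Coquelicot.
Open Scope R_scope.

Fixpoint node_index (x : nat -> R) (m : nat) (z : R) : option nat :=
  match m with
  | O => if Req_EM_T z (x O) then Some O else None
  | S m' => match node_index x m' z with
            | Some k => Some k
            | None => if Req_EM_T z (x m) then Some m else None
            end
  end.

(* Barycentric rational interpolant with weights (-1)^i at nodes x 0..x n
   and values v 0..v n, extended (by continuity) to the nodes by v k. *)
Definition bary (x : nat -> R) (n : nat) (v : nat -> R) (z : R) : R :=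
  match node_index x n z with
  | Some k => v k
  | None =>
      sum_f_R0 (fun i =>
        ((-1) ^ i / (z - x i)) / (sum_f_R0 (fun j => (-1) ^ j / (z - x j)) n)
        * v i) n
  end.

Definition alpha (K : nat) (i : nat) : R :=
  cos ((2 * INR i + 1) * PI / (2 * INR K)).

Definition u_enc (K : nat) (X : nat -> R) : R -> R :=
  bary (alpha K) (K - 1) X.

Definition is_derive_I (h : R -> R) (x l : R) : Prop :=
  filterlim (fun y => (h y - h x) / (y - x))
    (within (fun y => -1 <= y <= 1 /\ y <> x) (locally x)) (locally l).

Definition continuous_I (h : R -> R) (x : R) : Prop :=
  filterlim h (within (fun y => -1 <= y <= 1) (locally x)) (locally (h x)).

Definition supnorm (h : R -> R) : R :=
  real (Lub_Rbar (fun y => exists z, -1 <= z <= 1 /\ y = Rabs (h z))).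

(* Main.v *)
Require Import Defs.
From Stdlib Require Import Reals Lra Lia.
From Coquelicot Require Import Coquelicot.
Open Scope R_scope.


Lemma ball_R (x e y : R) : ball x e y <-> Rabs (y - x) < e.
Proof. reflexivity. Qed.

Lemma deriv_eps (h : R -> R) x l :
  is_derive_I h x l <->
  (forall eps, 0 < eps -> exists d, 0 < d /\ forall y, -1 <= y <= 1 -> y <> x ->
     Rabs (y - x) < d -> Rabs ((h y - h x)/(y - x) - l) < eps).
Proof.
  unfold is_derive_I. rewrite filterlim_locally. split.
  - intros H eps Heps. destruct (H (mkposreal eps Heps)) as [d Hd].
    exists d. split; [apply cond_pos|]. intros y Hy Hyx Hd'.
    apply (Hd y Hd' (conj Hy Hyx)).
  - intros H eps. destruct (H eps (cond_pos eps)) as [d [Hd Hd']].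
    exists (mkposreal d Hd). intros y Hb [Hy Hyx]. apply Hd'; auto.
Qed.

Lemma cont_eps (h : R -> R) x :
  continuous_I h x <->
  (forall eps, 0 < eps -> exists d, 0 < d /\ forall y, -1 <= y <= 1 ->
     Rabs (y - x) < d -> Rabs (h y - h x) < eps).
Proof.
  unfold continuous_I. rewrite filterlim_locally. split.
  - intros H eps Heps. destruct (H (mkposreal eps Heps)) as [d Hd].
    exists d. split; [apply cond_pos|]. intros y Hy Hd'.
    apply (Hd y Hd' Hy).
  - intros H eps. destruct (H eps (cond_pos eps)) as [d [Hd Hd']].
    exists (mkposreal d Hd). intros y Hb Hy. apply Hd'; auto.
Qed.

Lemma deriv_cont (h : R -> R) x l : is_derive_I h x l -> continuous_I h x.
Proof.
  rewrite deriv_eps, cont_eps. intros H eps Heps.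
  destruct (H 1 Rlt_0_1) as [d [Hd Hd']].
  exists (Rmin d (eps / (Rabs l + 1))). split.
  { apply Rmin_pos; auto. apply Rdiv_lt_0_compat; auto. pose proof (Rabs_pos l); lra. }
  intros y Hy Hyd. destruct (Req_dec y x) as [->|Hne].
  { replace (h x - h x) with 0 by ring. rewrite Rabs_R0; auto. }
  assert (Hyx : Rabs (y - x) < d) by (eapply Rlt_le_trans; [apply Hyd| apply Rmin_l]).
  specialize (Hd' y Hy Hne Hyx).
  assert (Hq : Rabs ((h y - h x) / (y - x)) <= Rabs l + 1).
  { replace ((h y - h x) / (y - x)) with (((h y - h x) / (y - x) - l) + l) by ring.
    eapply Rle_trans; [apply Rabs_triang|]. lra. }
  replace (h y - h x) with ((h y - h x) / (y - x) * (y - x)) by (field; lra).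
  rewrite Rabs_mult.
  assert (Hpos : 0 < Rabs l + 1) by (pose proof (Rabs_pos l); lra).
  assert (Hy2 : Rabs (y - x) < eps / (Rabs l + 1)) by (eapply Rlt_le_trans; [apply Hyd| apply Rmin_r]).
  apply Rle_lt_trans with ((Rabs l + 1) * Rabs (y - x)).
  { apply Rmult_le_compat_r; auto. apply Rabs_pos. }
  apply Rmult_lt_reg_r with (/ (Rabs l + 1)). apply Rinv_0_lt_compat; auto.
  replace ((Rabs l + 1) * Rabs (y - x) * / (Rabs l + 1)) with (Rabs (y - x)) by (field; lra).
  exact Hy2.
Qed.

Definition clamp (x : R) := Rmax (-1) (Rmin 1 x).

Lemma clamp_in x : -1 <= clamp x <= 1.
Proof. unfold clamp, Rmax, Rmin. repeat destruct Rle_dec; lra. Qed.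
Lemma clamp_id x : -1 <= x <= 1 -> clamp x = x.
Proof. unfold clamp, Rmax, Rmin. repeat destruct Rle_dec; lra. Qed.
Lemma clamp_lip x y : Rabs (clamp y - clamp x) <= Rabs (y - x).
Proof. unfold clamp, Rmax, Rmin. repeat destruct Rle_dec; unfold Rabs; repeat destruct Rcase_abs; lra. Qed.

Lemma bounded_I (h : R -> R) :
  (forall x, -1 <= x <= 1 -> continuous_I h x) ->
  exists B, forall x, -1 <= x <= 1 -> Rabs (h x) <= B.
Proof.
  intros Hc.
  assert (Hcp : forall c, -1 <= c <= 1 -> continuity_pt (fun t => Rabs (h (clamp t))) c).
  { intros c Hc1. apply continuity_pt_filterlim. apply filterlim_locally.
    intros eps. specialize (Hc (clamp c) (clamp_in c)). rewrite cont_eps in Hc.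
    destruct (Hc eps (cond_pos eps)) as [d [Hd Hd']].
    exists (mkposreal d Hd). intros y Hb. rewrite ball_R in *. simpl in Hb.
    eapply Rle_lt_trans; [apply Rabs_triang_inv2|].
    apply Hd'. apply clamp_in. eapply Rle_lt_trans; [apply clamp_lip|]. exact Hb. }
  destruct (continuity_ab_maj _ (-1) 1 ltac:(lra) Hcp) as [M [HM _]].
  exists (Rabs (h (clamp M))). intros x Hx. specialize (HM x Hx).
  rewrite clamp_id in HM; auto.
Qed.

Lemma supnorm_ge (h : R -> R) B :
  (forall x, -1 <= x <= 1 -> Rabs (h x) <= B) ->
  forall x, -1 <= x <= 1 -> Rabs (h x) <= supnorm h.
Proof.
  intros HB x Hx. unfold supnorm.
  set (E := fun y => exists z, -1 <= z <= 1 /\ y = Rabs (h z)).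
  destruct (Lub_Rbar_correct E) as [Hub Hlub].
  assert (Hle : Rbar_le (Lub_Rbar E) B).
  { apply Hlub. intros y [z [Hz ->]]. simpl. auto. }
  assert (Hge : Rbar_le (Rabs (h x)) (Lub_Rbar E)).
  { apply Hub. exists x; auto. }
  destruct (Lub_Rbar E); simpl in *; try contradiction; auto.
Qed.

Lemma supnorm_nonneg (h : R -> R) : 0 <= supnorm h.
Proof.
  unfold supnorm.
  set (E := fun y => exists z, -1 <= z <= 1 /\ y = Rabs (h z)).
  destruct (Lub_Rbar_correct E) as [Hub Hlub].
  assert (Hge : Rbar_le (Rabs (h 0)) (Lub_Rbar E)).
  { apply Hub. exists 0; split; [lra|auto]. }
  destruct (Lub_Rbar E); simpl in *; try contradiction; try lra.
  pose proof (Rabs_pos (h 0)); lra.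
Qed.

Lemma deriv_interior (h : R -> R) x l : -1 < x < 1 -> is_derive_I h x l ->
  derivable_pt_lim h x l.
Proof.
  intros Hx Hd. rewrite deriv_eps in Hd. intros eps Heps.
  destruct (Hd eps Heps) as [d [Hd0 Hd']].
  assert (Hm : 0 < Rmin d (Rmin (1 - x) (x + 1))) by (repeat apply Rmin_pos; lra).
  exists (mkposreal _ Hm). intros e He Hea. simpl in Hea.
  assert (H1 : Rabs e < d) by (eapply Rlt_le_trans; [apply Hea|apply Rmin_l]).
  assert (H2 : Rabs e < Rmin (1 - x) (x + 1)) by (eapply Rlt_le_trans; [apply Hea|apply Rmin_r]).
  assert (H3 : Rabs e < 1 - x) by (eapply Rlt_le_trans; [apply H2|apply Rmin_l]).
  assert (H4 : Rabs e < x + 1) by (eapply Rlt_le_trans; [apply H2|apply Rmin_r]).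
  apply Rabs_def2 in H3. apply Rabs_def2 in H4.
  specialize (Hd' (x + e)). replace (x + e - x) with e in Hd' by ring.
  apply Hd'; auto; lra.
Qed.

Lemma mono_open (h h' : R -> R) a b : -1 < a -> a <= b -> b < 1 ->
  (forall x, a <= x <= b -> is_derive_I h x (h' x) /\ 0 <= h' x) -> h a <= h b.
Proof.
  intros Ha Hab Hb Hd.
  destruct (Req_dec a b) as [->|Hne]; [lra|].
  assert (Hdp : forall x, a <= x <= b -> derivable_pt_lim h x (h' x)).
  { intros x Hx. apply deriv_interior; [lra|]. apply Hd; auto. }
  destruct (MVT_gen h a b h') as [c [Hc Heq]].
  - intros x Hx. rewrite Rmin_left in Hx by lra. rewrite Rmax_right in Hx by lra.
    apply is_derive_Reals. apply Hdp. lra.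
  - intros x Hx. rewrite Rmin_left in Hx by lra. rewrite Rmax_right in Hx by lra.
    apply derivable_continuous_pt. exists (h' x). apply Hdp. lra.
  - rewrite Rmin_left in Hc by lra. rewrite Rmax_right in Hc by lra.
    assert (0 <= h' c) by (apply Hd; lra).
    assert (0 <= h' c * (b - a)) by (apply Rmult_le_pos; lra). lra.
Qed.

Lemma mono (h h' : R -> R) a b : -1 <= a -> a <= b -> b <= 1 ->
  (forall x, a <= x <= b -> is_derive_I h x (h' x) /\ 0 <= h' x) -> h a <= h b.
Proof.
  intros Ha Hab Hb Hd.
  destruct (Req_dec a b) as [->|Hne]; [lra|].
  destruct (Rle_dec (h a) (h b)) as [|Hn]; auto. exfalso.
  set (eps := (h a - h b) / 3).
  assert (He : 0 < eps) by (unfold eps; lra).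
  assert (Hca := deriv_cont h a (h' a) (proj1 (Hd a ltac:(lra)))).
  assert (Hcb := deriv_cont h b (h' b) (proj1 (Hd b ltac:(lra)))).
  rewrite cont_eps in Hca, Hcb.
  destruct (Hca eps He) as [d1 [Hd1 Ha']].
  destruct (Hcb eps He) as [d2 [Hd2 Hb']].
  set (a' := a + Rmin d1 (b - a) / 3).
  set (b' := b - Rmin d2 (b - a) / 3).
  assert (Hm1 : 0 < Rmin d1 (b - a)) by (apply Rmin_pos; lra).
  assert (Hm2 : 0 < Rmin d2 (b - a)) by (apply Rmin_pos; lra).
  pose proof (Rmin_l d1 (b - a)). pose proof (Rmin_r d1 (b - a)).
  pose proof (Rmin_l d2 (b - a)). pose proof (Rmin_r d2 (b - a)).
  assert (Hmid : h a' <= h b').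
  { apply (mono_open h h'); unfold a', b'; try lra.
    intros x Hx. apply Hd. lra. }
  assert (HA : Rabs (h a' - h a) < eps).
  { apply Ha'; unfold a'; [lra|]. rewrite Rabs_right; lra. }
  assert (HB : Rabs (h b' - h b) < eps).
  { apply Hb'; unfold b'; [lra|]. rewrite Rabs_left; lra. }
  apply Rabs_def2 in HA. apply Rabs_def2 in HB. unfold eps in *. lra.
Qed.

Lemma deriv_comb (f : R -> R) x l al be ga ep c :
  is_derive_I f x l ->
  is_derive_I (fun t => al * ((t - c) * (t - c)) + be * t + ga + ep * f t) x
    (2 * al * (x - c) + be + ep * l).
Proof.
  rewrite !deriv_eps. intros H eps Heps.
  assert (Ha : 0 < Rabs al + 1) by (pose proof (Rabs_pos al); lra).
  assert (Hb : 0 < Rabs ep + 1) by (pose proof (Rabs_pos ep); lra).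
  destruct (H (eps / 2 / (Rabs ep + 1))) as [d [Hd Hd']].
  { apply Rdiv_lt_0_compat; lra. }
  exists (Rmin d (eps / 2 / (Rabs al + 1))). split.
  { apply Rmin_pos; auto. apply Rdiv_lt_0_compat; lra. }
  intros y Hy Hne Hyd.
  assert (H1 : Rabs (y - x) < d) by (eapply Rlt_le_trans; [apply Hyd|apply Rmin_l]).
  assert (H2 : Rabs (y - x) < eps / 2 / (Rabs al + 1)) by (eapply Rlt_le_trans; [apply Hyd|apply Rmin_r]).
  specialize (Hd' y Hy Hne H1).
  assert (Hyx : y - x <> 0) by lra.
  replace ((al * ((y - c) * (y - c)) + be * y + ga + ep * f y -
     (al * ((x - c) * (x - c)) + be * x + ga + ep * f x)) / (y - x) -
    (2 * al * (x - c) + be + ep * l))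
  with (al * (y - x) + ep * ((f y - f x) / (y - x) - l)) by (field; auto).
  eapply Rle_lt_trans; [apply Rabs_triang|]. rewrite !Rabs_mult.
  assert (E1 : Rabs al * Rabs (y - x) <= eps / 2).
  { apply Rle_trans with ((Rabs al + 1) * (eps / 2 / (Rabs al + 1))).
    - apply Rmult_le_compat; try apply Rabs_pos; lra.
    - right; field; lra. }
  assert (E2 : Rabs ep * Rabs ((f y - f x) / (y - x) - l) < eps / 2).
  { apply Rle_lt_trans with (Rabs ep * (eps / 2 / (Rabs ep + 1))).
    - apply Rmult_le_compat_l; [apply Rabs_pos|lra].
    - apply Rlt_le_trans with ((Rabs ep + 1) * (eps / 2 / (Rabs ep + 1))).
      + apply Rmult_lt_compat_r; [apply Rdiv_lt_0_compat; lra| lra].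
      + right; field; lra. }
  lra.
Qed.

Section Tay.
Variables (g g1 g2 : R -> R) (M2 : R).
Hypothesis Hg : forall z, -1 <= z <= 1 -> is_derive_I g z (g1 z).
Hypothesis Hg1 : forall z, -1 <= z <= 1 -> is_derive_I g1 z (g2 z).
Hypothesis HM : forall z, -1 <= z <= 1 -> Rabs (g2 z) <= M2.

Lemma lip_g1_aux a b : -1 <= a -> a <= b -> b <= 1 -> Rabs (g1 b - g1 a) <= M2 * (b - a).
Proof.
  intros Ha Hab Hb.
  assert (K1 := mono (fun t => 0 * ((t - 0) * (t - 0)) + M2 * t + 0 + -1 * g1 t)
     (fun x => 2 * 0 * (x - 0) + M2 + -1 * g2 x) a b Ha Hab Hb).
  assert (K2 := mono (fun t => 0 * ((t - 0) * (t - 0)) + M2 * t + 0 + 1 * g1 t)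
     (fun x => 2 * 0 * (x - 0) + M2 + 1 * g2 x) a b Ha Hab Hb).
  simpl in K1, K2.
  assert (A1 : 0 * ((a - 0) * (a - 0)) + M2 * a + 0 + -1 * g1 a <=
               0 * ((b - 0) * (b - 0)) + M2 * b + 0 + -1 * g1 b).
  { apply K1. intros x Hx. split. apply deriv_comb. apply Hg1; lra.
    pose proof (HM x ltac:(lra)). apply Rabs_le_between in H. nra. }
  assert (A2 : 0 * ((a - 0) * (a - 0)) + M2 * a + 0 + 1 * g1 a <=
               0 * ((b - 0) * (b - 0)) + M2 * b + 0 + 1 * g1 b).
  { apply K2. intros x Hx. split. apply deriv_comb. apply Hg1; lra.
    pose proof (HM x ltac:(lra)). apply Rabs_le_between in H. nra. }
  apply Rabs_le. lra.
Qed.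

Lemma lip_g1 a b : -1 <= a <= 1 -> -1 <= b <= 1 -> Rabs (g1 b - g1 a) <= M2 * Rabs (b - a).
Proof.
  intros Ha Hb. destruct (Rle_dec a b).
  - rewrite (Rabs_right (b - a)) by lra. apply lip_g1_aux; lra.
  - rewrite Rabs_minus_sym, (Rabs_left (b - a)) by lra.
    replace (- (b - a)) with (a - b) by ring. apply lip_g1_aux; lra.
Qed.

Lemma taylor c t : -1 <= c <= 1 -> -1 <= t <= 1 ->
  Rabs (g t - g c - g1 c * (t - c)) <= M2 / 2 * ((t - c) * (t - c)).
Proof.
  intros Hc Ht. destruct (Rle_dec c t).
  - assert (A1 : (M2/2) * ((c - c) * (c - c)) + g1 c * c + 0 + -1 * g c <=
                 (M2/2) * ((t - c) * (t - c)) + g1 c * t + 0 + -1 * g t).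
    { apply (mono (fun u => (M2/2) * ((u - c) * (u - c)) + g1 c * u + 0 + -1 * g u) (fun x => 2 * (M2/2) * (x - c) + g1 c + -1 * g1 x)); try lra.
      intros x Hx. split. apply deriv_comb. apply Hg; lra.
      pose proof (lip_g1 c x Hc ltac:(lra)). rewrite (Rabs_right (x - c)) in H by lra.
      apply Rabs_le_between in H. nra. }
    assert (A2 : (M2/2) * ((c - c) * (c - c)) + - g1 c * c + 0 + 1 * g c <=
                 (M2/2) * ((t - c) * (t - c)) + - g1 c * t + 0 + 1 * g t).
    { apply (mono (fun u => (M2/2) * ((u - c) * (u - c)) + - g1 c * u + 0 + 1 * g u) (fun x => 2 * (M2/2) * (x - c) + - g1 c + 1 * g1 x)); try lra.
      intros x Hx. split. apply deriv_comb. apply Hg; lra.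
      pose proof (lip_g1 c x Hc ltac:(lra)). rewrite (Rabs_right (x - c)) in H by lra.
      apply Rabs_le_between in H. nra. }
    apply Rabs_le. split; nra.
  - assert (A1 : (-(M2/2)) * ((t - c) * (t - c)) + g1 c * t + 0 + -1 * g t <=
                 (-(M2/2)) * ((c - c) * (c - c)) + g1 c * c + 0 + -1 * g c).
    { apply (mono (fun u => (-(M2/2)) * ((u - c) * (u - c)) + g1 c * u + 0 + -1 * g u) (fun x => 2 * (-(M2/2)) * (x - c) + g1 c + -1 * g1 x)); try lra.
      intros x Hx. split. apply deriv_comb. apply Hg; lra.
      pose proof (lip_g1 c x Hc ltac:(lra)). rewrite (Rabs_left1 (x - c)) in H by lra.
      apply Rabs_le_between in H. nra. }
    assert (A2 : (-(M2/2)) * ((t - c) * (t - c)) + - g1 c * t + 0 + 1 * g t <=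
                 (-(M2/2)) * ((c - c) * (c - c)) + - g1 c * c + 0 + 1 * g c).
    { apply (mono (fun u => (-(M2/2)) * ((u - c) * (u - c)) + - g1 c * u + 0 + 1 * g u) (fun x => 2 * (-(M2/2)) * (x - c) + - g1 c + 1 * g1 x)); try lra.
      intros x Hx. split. apply deriv_comb. apply Hg; lra.
      pose proof (lip_g1 c x Hc ltac:(lra)). rewrite (Rabs_left1 (x - c)) in H by lra.
      apply Rabs_le_between in H. nra. }
    apply Rabs_le. split; nra.
Qed.
End Tay.

Definition psi (g g1 : R -> R) (z t : R) := (g t - g z) / (t - z) - g1 z.

Lemma abs_div_le (x y b : R) : y <> 0 -> Rabs x <= b -> Rabs (x / y) <= b / Rabs y.
Proof.
  intros Hy Hx. unfold Rdiv. rewrite Rabs_mult, Rabs_inv.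
  apply Rmult_le_compat_r; auto. left. apply Rinv_0_lt_compat. apply Rabs_pos_lt; auto.
Qed.

Section Psi.
Variables (g g1 g2 : R -> R) (M2 : R).
Hypothesis Hg : forall z, -1 <= z <= 1 -> is_derive_I g z (g1 z).
Hypothesis Hg1 : forall z, -1 <= z <= 1 -> is_derive_I g1 z (g2 z).
Hypothesis HM : forall z, -1 <= z <= 1 -> Rabs (g2 z) <= M2.

Lemma psi_bound z t : -1 <= z <= 1 -> -1 <= t <= 1 -> t <> z ->
  Rabs (psi g g1 z t) <= M2 / 2 * Rabs (t - z).
Proof.
  intros Hz Ht Hne. unfold psi.
  replace ((g t - g z) / (t - z) - g1 z) with ((g t - g z - g1 z * (t - z)) / (t - z))
    by (field; lra).
  assert (Hp := taylor g g1 g2 M2 Hg Hg1 HM z t Hz Ht).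
  eapply Rle_trans. apply abs_div_le; [lra|exact Hp].
  assert (0 < Rabs (t - z)) by (apply Rabs_pos_lt; lra).
  replace ((t - z) * (t - z)) with (Rabs (t - z) * Rabs (t - z)).
  2:{ rewrite <- Rabs_mult. rewrite Rabs_right. ring. apply Rle_ge, Rle_0_sqr. }
  right. field. lra.
Qed.

Lemma psi_lip_same z a b : -1 <= z <= 1 -> -1 <= a <= 1 -> -1 <= b <= 1 ->
  0 < (a - z) * (b - z) -> Rabs (b - z) <= Rabs (a - z) ->
  Rabs (psi g g1 z a - psi g g1 z b) <= M2 / 2 * Rabs (a - b).
Proof.
  intros Hz Ha Hb Hs Hl.
  assert (Hu : a - z <> 0) by (intro H; rewrite H in Hs; lra).
  assert (Hv : b - z <> 0) by (intro H; rewrite H in Hs; lra).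
  assert (E1 := taylor g g1 g2 M2 Hg Hg1 HM b a Hb Ha).
  assert (E2 := taylor g g1 g2 M2 Hg Hg1 HM b z Hb Hz).
  unfold psi.
  replace ((g a - g z) / (a - z) - g1 z - ((g b - g z) / (b - z) - g1 z))
   with ((g a - g b - g1 b * (a - b)) / (a - z) +
         (g z - g b - g1 b * (z - b)) * (a - b) / ((a - z) * (b - z)))
   by (field; lra).
  eapply Rle_trans; [apply Rabs_triang|].
  eapply Rle_trans; [apply Rplus_le_compat; apply abs_div_le|].
  - exact Hu.
  - exact E1.
  - apply Rmult_integral_contrapositive_currified; auto.
  - rewrite Rabs_mult. apply Rmult_le_compat_r; [apply Rabs_pos|exact E2].
  - assert (Hd : Rabs (a - b) + Rabs (b - z) = Rabs (a - z)).
    { destruct (Rle_dec 0 (a - z)).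
      - assert (0 < b - z) by nra. unfold Rabs in *; repeat destruct Rcase_abs; lra.
      - assert (b - z < 0) by nra. unfold Rabs in *; repeat destruct Rcase_abs; lra. }
    assert (0 < Rabs (a - z)) by (apply Rabs_pos_lt; auto).
    assert (0 < Rabs (b - z)) by (apply Rabs_pos_lt; auto).
    rewrite Rabs_mult.
    replace ((z - b) * (z - b)) with (Rabs (b - z) * Rabs (b - z)).
    2:{ rewrite <- Rabs_mult. rewrite Rabs_right. ring. apply Rle_ge, Rle_0_sqr. }
    replace ((a - b) * (a - b)) with (Rabs (a - b) * Rabs (a - b)).
    2:{ rewrite <- Rabs_mult. rewrite Rabs_right. ring. apply Rle_ge, Rle_0_sqr. }
    right. rewrite <- Hd. field. lra.
Qed.

Lemma psi_lip z a b : -1 <= z <= 1 -> -1 <= a <= 1 -> -1 <= b <= 1 ->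
  a <> z -> b <> z ->
  Rabs (psi g g1 z a - psi g g1 z b) <= M2 / 2 * Rabs (a - b).
Proof.
  intros Hz Ha Hb Haz Hbz.
  destruct (Rlt_dec 0 ((a - z) * (b - z))) as [Hs|Hs].
  - destruct (Rle_dec (Rabs (b - z)) (Rabs (a - z))).
    + apply psi_lip_same; auto.
    + rewrite Rabs_minus_sym, (Rabs_minus_sym a b). apply psi_lip_same; auto; [nra|lra].
  - eapply Rle_trans; [apply Rabs_triang|]. rewrite Rabs_Ropp.
    eapply Rle_trans; [apply Rplus_le_compat; apply psi_bound; auto|].
    assert (Hd : Rabs (a - z) + Rabs (b - z) = Rabs (a - b)).
    { assert ((a - z) * (b - z) < 0).
      { destruct (Req_dec ((a - z) * (b - z)) 0) as [H0|H0].
        - apply Rmult_integral in H0; lra.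
        - lra. }
      destruct (Rle_dec 0 (a - z)).
      - assert (b - z < 0) by nra. unfold Rabs in *; repeat destruct Rcase_abs; lra.
      - assert (0 < b - z) by nra. unfold Rabs in *; repeat destruct Rcase_abs; lra. }
    rewrite <- Hd. lra.
Qed.
End Psi.

Lemma sum_opp (a : nat -> R) m : sum_f_R0 (fun i => - a i) m = - sum_f_R0 a m.
Proof. induction m; simpl; [ring|rewrite IHm; ring]. Qed.

Lemma sum_shift (A : nat -> R) m :
  sum_f_R0 A (S m) = A 0%nat + sum_f_R0 (fun i => A (S i)) m.
Proof. rewrite decomp_sum by lia. reflexivity. Qed.

Lemma alt_dec m : forall a : nat -> R,
  (forall i, (i < m)%nat -> a (S i) <= a i) -> (forall i, (i <= m)%nat -> 0 <= a i) ->
  0 <= sum_f_R0 (fun i => (-1)^i * a i) m <= a 0%nat /\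
  ((1 <= m)%nat -> a 0%nat - a 1%nat <= sum_f_R0 (fun i => (-1)^i * a i) m).
Proof.
  induction m; intros a Hd Hp.
  - simpl. assert (0 <= a 0%nat) by (apply Hp; lia). split; [split; lra|intros; lia].
  - rewrite sum_shift.
    assert (Heq : sum_f_R0 (fun i => (-1) ^ S i * a (S i)) m =
                  - sum_f_R0 (fun i => (-1) ^ i * a (S i)) m).
    { rewrite <- sum_opp. apply sum_eq. intros i _. simpl. ring. }
    rewrite Heq. simpl pow.
    assert (S1 : forall i, (i < m)%nat -> a (S (S i)) <= a (S i)) by (intros i Hi; apply Hd; lia).
    assert (S2 : forall i, (i <= m)%nat -> 0 <= a (S i)) by (intros i Hi; apply Hp; lia).
    destruct (IHm (fun i => a (S i)) S1 S2) as [[H1 H2] _].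
    assert (a 1%nat <= a 0%nat) by (apply Hd; lia).
    split; [split|intros _]; lra.
Qed.

Lemma alt_pairs (y z : nat -> R) (c : R) n : 0 <= c ->
  (forall i, (i < n)%nat -> z (S i) <= z i) ->
  (forall i j, (i <= n)%nat -> (j <= n)%nat -> Rabs (y i - y j) <= c * Rabs (z i - z j)) ->
  forall m, (2 * m + 1 <= n)%nat ->
  Rabs (sum_f_R0 (fun i => (-1)^i * y i) (2 * m + 1)) <= c * (z 0%nat - z (2 * m + 1)%nat).
Proof.
  intros Hc Hz Hy. induction m; intros Hm.
  - simpl. replace (1 * y 0%nat + -1 * 1 * y 1%nat) with (y 0%nat - y 1%nat) by ring.
    eapply Rle_trans; [apply Hy; lia|]. rewrite Rabs_right; [lra|].
    assert (z 1%nat <= z 0%nat) by (apply Hz; lia). lra.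
  - replace (2 * S m + 1)%nat with (S (S (2 * m + 1))) by lia.
    rewrite !tech5.
    replace (S (S (2 * m + 1))) with (2 * (m + 1) + 1)%nat by lia.
    replace (S (2 * m + 1)) with (2 * (m + 1))%nat by lia.
    rewrite !pow_add, !pow_mult. simpl pow.
    replace (-1 * (-1 * 1)) with 1 by ring. rewrite pow1.
    match goal with |- Rabs ?X <= _ => replace X with (sum_f_R0 (fun i : nat => (-1) ^ i * y i) (2 * m + 1) + (y (2 * (m + 1))%nat - y (2 * (m + 1) + 1)%nat)) by ring end.
    eapply Rle_trans; [apply Rabs_triang|].
    assert (IH := IHm ltac:(lia)).
    assert (Hp : Rabs (y (2 * (m + 1))%nat - y (2 * (m + 1) + 1)%nat) <=
                 c * (z (2 * (m + 1))%nat - z (2 * (m + 1) + 1)%nat)).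
    { eapply Rle_trans; [apply Hy; lia|]. rewrite Rabs_right; [lra|].
      assert (z (2 * (m + 1) + 1)%nat <= z (2 * (m + 1))%nat).
      { replace (2 * (m + 1) + 1)%nat with (S (2 * (m + 1))) by lia. apply Hz; lia. }
      lra. }
    assert (z (2 * (m + 1))%nat <= z (2 * m + 1)%nat).
    { replace (2 * (m + 1))%nat with (S (2 * m + 1)) by lia. apply Hz; lia. }
    nra.
Qed.

Lemma alt_inc k : forall a : nat -> R,
  (forall i, (i < k)%nat -> a i <= a (S i)) -> (forall i, (i <= k)%nat -> 0 <= a i) ->
  0 <= (-1)^k * sum_f_R0 (fun i => (-1)^i * a i) k <= a k /\
  ((1 <= k)%nat -> a k - a (k - 1)%nat <= (-1)^k * sum_f_R0 (fun i => (-1)^i * a i) k).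
Proof.
  induction k; intros a Hi Hp.
  - simpl. assert (0 <= a 0%nat) by (apply Hp; lia). split; [split; lra|intros; lia].
  - rewrite tech5. 
    assert (S1 : forall i, (i < k)%nat -> a i <= a (S i)) by (intros i H; apply Hi; lia).
    assert (S2 : forall i, (i <= k)%nat -> 0 <= a i) by (intros i H; apply Hp; lia).
    destruct (IHk a S1 S2) as [[H1 H2] _].
    assert (a k <= a (S k)) by (apply Hi; lia).
    replace ((-1) ^ S k * (sum_f_R0 (fun i : nat => (-1) ^ i * a i) k + (-1) ^ S k * a (S k)))
      with (a (S k) - (-1) ^ k * sum_f_R0 (fun i : nat => (-1) ^ i * a i) k).
    2:{ assert (Hk : (-1)^k * (-1)^k = 1).
        { rewrite <- pow_add. replace (k + k)%nat with (2 * k)%nat by lia. rewrite pow_mult.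
          replace ((-1)^2) with 1 by ring. apply pow1. }
        symmetry. simpl. transitivity (- (-1)^k * sum_f_R0 (fun i : nat => (-1) ^ i * a i) k + ((-1)^k * (-1)^k) * a (S k)).
        - ring.
        - rewrite Hk. ring. }
    replace (S k - 1)%nat with k by lia.
    split; [split|intros _]; lra.
Qed.

Lemma sum_split (A : nat -> R) k d :
  sum_f_R0 A (k + 1 + d) = sum_f_R0 A k + sum_f_R0 (fun m => A (k + 1 + m)%nat) d.
Proof.
  induction d.
  - rewrite Nat.add_0_r. replace (k + 1)%nat with (S k) by lia. rewrite tech5. simpl.
    rewrite Nat.add_0_r. replace (k + 1)%nat with (S k) by lia. reflexivity.
  - replace (k + 1 + S d)%nat with (S (k + 1 + d)) by lia. rewrite !tech5, IHd.
    replace (k + 1 + S d)%nat with (S (k + 1 + d)) by lia. ring.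
Qed.

Definition Dsum (x : nat -> R) n z := sum_f_R0 (fun j => (-1)^j / (z - x j)) n.

Section DL.
Variables (x : nat -> R) (n : nat) (z : R).
Hypothesis Hdec : forall i, (i < n)%nat -> x (S i) < x i.
Hypothesis Hnn : forall i, (i <= n)%nat -> z <> x i.

Lemma x_dec i j : (i < j)%nat -> (j <= n)%nat -> x j < x i.
Proof.
  intros H1 H2. induction j; [lia|].
  destruct (Nat.eq_dec i j) as [->|Hne].
  - apply Hdec; lia.
  - apply Rlt_trans with (x j); [apply Hdec; lia|apply IHj; lia].
Qed.

Lemma D_top : (1 <= n)%nat -> x 0%nat < z ->
  1 / (z - x 0%nat) - 1 / (z - x 1%nat) <= Rabs (Dsum x n z).
Proof.
  intros Hn Hz.
  assert (HH := alt_dec n (fun i => 1 / (z - x i))).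
  destruct HH as [[H1 H2] H3].
  - intros i Hi. assert (x (S i) < x i) by (apply Hdec; auto).
    assert (x i <= x 0%nat).
    { destruct i; [lra|left; apply x_dec; lia]. }
    apply Rmult_le_reg_r with ((z - x i) * (z - x (S i))). nra.
    unfold Rdiv. field_simplify; try lra. 
  - intros i Hi. assert (x i <= x 0%nat) by (destruct i; [lra|left; apply x_dec; lia]).
    unfold Rdiv. apply Rmult_le_pos; [lra|left; apply Rinv_0_lt_compat; lra].
  - unfold Dsum. replace (sum_f_R0 (fun j : nat => (-1) ^ j / (z - x j)) n)
      with (sum_f_R0 (fun i : nat => (-1) ^ i * (1 / (z - x i))) n)
      by (apply sum_eq; intros; unfold Rdiv; ring).
    rewrite Rabs_right by lra. apply H3; auto.
Qed.

Lemma pow_m1_sq k : (-1)^k * (-1)^k = 1.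
Proof.
  rewrite <- pow_add. replace (k + k)%nat with (2 * k)%nat by lia. rewrite pow_mult.
  replace ((-1)^2) with 1 by ring. apply pow1.
Qed.

Lemma pow_m1_abs k : Rabs ((-1)^k) = 1.
Proof. assert (H1 : Rabs (-1) = 1) by (rewrite Rabs_left; lra). induction k; simpl; [apply Rabs_R1|rewrite Rabs_mult, IHk, H1; ring]. Qed.

Lemma Rabs_sgn k X : Rabs X = Rabs ((-1)^k * X).
Proof. rewrite Rabs_mult, pow_m1_abs. ring. Qed.

Lemma D_bot : (1 <= n)%nat -> z < x n ->
  1 / (x n - z) - 1 / (x (n - 1)%nat - z) <= Rabs (Dsum x n z).
Proof.
  intros Hn Hz.
  assert (Hle : forall i, (i <= n)%nat -> x n <= x i).
  { intros i Hi. destruct (Nat.eq_dec i n) as [->|]; [lra|left; apply x_dec; lia]. }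
  assert (HH := alt_inc n (fun i => 1 / (x i - z))).
  destruct HH as [[H1 H2] H3].
  - intros i Hi. assert (x (S i) < x i) by (apply Hdec; auto).
    assert (x n <= x (S i)) by (apply Hle; lia).
    apply Rmult_le_reg_r with ((x i - z) * (x (S i) - z)). nra.
    unfold Rdiv. field_simplify; try lra.
  - intros i Hi. assert (x n <= x i) by (apply Hle; auto).
    unfold Rdiv. apply Rmult_le_pos; [lra|left; apply Rinv_0_lt_compat; lra].
  - unfold Dsum.
    replace (sum_f_R0 (fun j : nat => (-1) ^ j / (z - x j)) n)
      with (- sum_f_R0 (fun i : nat => (-1) ^ i * (1 / (x i - z))) n).
    2:{ rewrite <- sum_opp. apply sum_eq. intros i Hi.
        assert (x n <= x i) by (apply Hle; auto). field. lra. }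
    rewrite Rabs_Ropp.
    cbv beta in H1, H3. rewrite (Rabs_sgn n). rewrite Rabs_right by lra. apply H3; auto.
Qed.

Lemma D_gap k : (k < n)%nat -> x (S k) < z < x k ->
  (k = 0%nat -> 1 / (x 0%nat - z) <= Rabs (Dsum x n z)) /\ ((1 <= k)%nat -> 1 / (x k - z) - 1 / (x (k - 1)%nat - z) <= Rabs (Dsum x n z)) /\ ((k + 1 = n)%nat -> 1 / (z - x (k + 1)%nat) <= Rabs (Dsum x n z)) /\ ((k + 1 < n)%nat -> 1 / (z - x (k + 1)%nat) - 1 / (z - x (k + 2)%nat) <= Rabs (Dsum x n z)).
Proof.
  intros Hk [Hz1 Hz2].
  assert (HleL : forall i, (i <= k)%nat -> x k <= x i).
  { intros i Hi. destruct (Nat.eq_dec i k) as [->|]; [lra|left; apply x_dec; lia]. }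
  assert (HleR : forall i, (k + 1 <= i)%nat -> (i <= n)%nat -> x i <= x (k + 1)%nat).
  { intros i Hi Hin. destruct (Nat.eq_dec i (k + 1)) as [->|]; [lra|left; apply x_dec; lia]. }
  replace (S k) with (k + 1)%nat in Hz1 by lia.
  set (a := fun i => 1 / (x i - z)).
  set (b := fun m => 1 / (z - x (k + 1 + m)%nat)).
  set (d := (n - k - 1)%nat).
  assert (HA := alt_inc k a).
  destruct HA as [[HA1 HA2] HA3].
  { intros i Hi. assert (x (S i) < x i) by (apply Hdec; lia).
    assert (x k <= x (S i)) by (apply HleL; lia). unfold a.
    apply Rmult_le_reg_r with ((x i - z) * (x (S i) - z)). nra.
    unfold Rdiv. field_simplify; try lra. }
  { intros i Hi. assert (x k <= x i) by (apply HleL; auto). unfold a.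
    unfold Rdiv. apply Rmult_le_pos; [lra|left; apply Rinv_0_lt_compat; lra]. }
  assert (HB := alt_dec d b).
  destruct HB as [[HB1 HB2] HB3].
  { intros i Hi. assert (x (S (k + 1 + i)) < x (k + 1 + i)%nat) by (apply Hdec; unfold d in Hi; lia).
    assert (x (k + 1 + i)%nat <= x (k + 1)%nat) by (apply HleR; unfold d in Hi; lia). unfold b.
    replace (k + 1 + S i)%nat with (S (k + 1 + i)) by lia.
    apply Rmult_le_reg_r with ((z - x (k + 1 + i)%nat) * (z - x (S (k + 1 + i)))). nra.
    unfold Rdiv. field_simplify; try lra. }
  { intros i Hi. assert (x (k + 1 + i)%nat <= x (k + 1)%nat) by (apply HleR; unfold d in Hi; lia). unfold b.
    unfold Rdiv. apply Rmult_le_pos; [lra|left; apply Rinv_0_lt_compat; lra]. }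
  set (SA := sum_f_R0 (fun i => (-1)^i * a i) k) in *.
  set (SB := sum_f_R0 (fun i => (-1)^i * b i) d) in *.
  assert (HD : Dsum x n z = - SA + (-1)^(k + 1) * SB).
  { unfold Dsum. replace n with (k + 1 + d)%nat at 1 by (unfold d; lia).
    rewrite sum_split. unfold SA, SB. f_equal.
    - rewrite <- sum_opp. apply sum_eq. intros i Hi. unfold a.
      assert (x k <= x i) by (apply HleL; auto). field. lra.
    - rewrite scal_sum. apply sum_eq. intros i Hi. unfold b.
      rewrite pow_add. assert (x (k + 1 + i)%nat <= x (k + 1)%nat) by (apply HleR; unfold d in Hi; lia).
      replace (k + 1 + i)%nat with (k + (1 + i))%nat by lia. rewrite pow_add.
      replace (k + (1 + i))%nat with (k + 1 + i)%nat by lia. field. lra. }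
  assert (HDabs : Rabs (Dsum x n z) = (-1)^k * SA + SB).
  { rewrite (Rabs_sgn (k + 1)), HD.
    replace ((-1) ^ (k + 1) * (- SA + (-1) ^ (k + 1) * SB))
       with ((-1)^k * SA * ((-1)^1 * (-1)^1) + ((-1)^(k+1) * (-1)^(k+1)) * SB)
       by (rewrite pow_add; ring).
    rewrite !pow_m1_sq. rewrite Rabs_right; [ring|lra]. }
  rewrite HDabs. split; [|split; [|split]].
  - intros ->. simpl in *. unfold SA. simpl. unfold a. lra.
  - intros H1. specialize (HA3 H1). unfold a in HA3. lra.
  - intros H1. assert (d = 0%nat) by (unfold d; lia). unfold SB. rewrite H. simpl.
    unfold b. rewrite Nat.add_0_r. lra.
  - intros H1. assert (1 <= d)%nat by (unfold d; lia). specialize (HB3 H). unfold b in HB3.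
    rewrite Nat.add_0_r in HB3. replace (k + 1 + 1)%nat with (k + 2)%nat in HB3 by lia. lra.
Qed.
End DL.

Lemma sin_mono a b : 0 <= a -> a <= b -> b <= PI / 2 -> sin a <= sin b.
Proof.
  intros. destruct (Req_dec a b) as [->|Hn]; [lra|].
  left. apply sin_increasing_1; lra.
Qed.

Lemma sin_sub a b : 0 <= sin a -> 0 <= sin b -> sin (a + b) <= sin a + sin b.
Proof.
  intros. rewrite sin_plus. pose proof (COS_bound a). pose proof (COS_bound b). nra.
Qed.

Section Trig.
Variable N : nat.
Hypothesis HN : (1 <= N)%nat.

Definition xx := PI / (2 * INR N).
Definition cc (j : nat) := cos (INR j * PI / INR N).

Lemma INR_N_pos : 0 < INR N.
Proof. apply lt_0_INR. lia. Qed.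

Lemma xx_pos : 0 < xx.
Proof. unfold xx. pose proof INR_N_pos. pose proof PI_RGT_0. apply Rdiv_lt_0_compat; lra. Qed.

Lemma xx_N : 2 * INR N * xx = PI.
Proof. unfold xx. pose proof INR_N_pos. field. lra. Qed.

Lemma cc_eq j : cc j = cos (2 * (INR j * xx)).
Proof. unfold cc, xx. f_equal. pose proof INR_N_pos. field. lra. Qed.

Lemma sin_nonneg m : (m <= 2 * N)%nat -> 0 <= sin (INR m * xx).
Proof.
  intros Hm. apply sin_ge_0.
  - apply Rmult_le_pos; [apply pos_INR|left; apply xx_pos].
  - rewrite <- xx_N. apply le_INR in Hm. rewrite mult_INR in Hm. simpl in Hm.
    pose proof xx_pos. nra.
Qed.

Lemma sin_mul m : (m <= 2 * N)%nat -> sin (INR m * xx) <= INR m * sin xx.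
Proof.
  induction m; intros Hm.
  - simpl. rewrite Rmult_0_l, sin_0. lra.
  - rewrite S_INR. replace ((INR m + 1) * xx) with (INR m * xx + xx) by ring.
    eapply Rle_trans; [apply sin_sub|].
    + apply sin_nonneg; lia.
    + replace xx with (INR 1 * xx) by (simpl; ring). apply sin_nonneg; lia.
    + specialize (IHm ltac:(lia)). lra.
Qed.

Lemma sin_ge_xx m : (1 <= m)%nat -> (m + 1 <= 2 * N)%nat -> sin xx <= sin (INR m * xx).
Proof.
  intros H1 H2. pose proof xx_pos as Hx. pose proof xx_N as HxN.
  assert (Hm1 : 1 <= INR m) by (apply (le_INR 1); auto).
  assert (Hm2 : INR m + 1 <= 2 * INR N) by (apply le_INR in H2; rewrite plus_INR, mult_INR in H2; simpl in H2; lra).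
  destruct (Rle_dec (INR m * xx) (PI / 2)).
  - apply sin_mono; nra.
  - rewrite <- (sin_PI_x (INR m * xx)). apply sin_mono; nra.
Qed.

Lemma cc_diff j j' : cc j - cc j' = 2 * sin (INR (j + j') * xx) * sin ((INR j' - INR j) * xx).
Proof.
  rewrite !cc_eq, form2, plus_INR.
  replace ((2 * (INR j * xx) - 2 * (INR j' * xx)) / 2) with (- ((INR j' - INR j) * xx)) by field.
  replace ((2 * (INR j * xx) + 2 * (INR j' * xx)) / 2) with ((INR j + INR j') * xx) by field.
  rewrite sin_neg. ring.
Qed.

Lemma cc_sub_one j : 1 - cc j = 2 * sin (INR j * xx) * sin (INR j * xx).
Proof. rewrite cc_eq, cos_2a_sin. ring. Qed.

Lemma cc_refl t : (t <= N)%nat -> cc (N - t) = - cc t.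
Proof.
  intros Ht. unfold cc. rewrite minus_INR by auto. pose proof INR_N_pos.
  replace ((INR N - INR t) * PI / INR N) with (- (INR t * PI / INR N) + PI) by (field; lra).
  rewrite neg_cos, cos_neg. reflexivity.
Qed.

End Trig.

Section Trig2.
Variables N s : nat.
Hypothesis HsN : (s + 2 < N)%nat.

Definition SS := sin (INR (s + 1) * xx N).
Definition Rc := (INR s + 1) * (INR s + 3) * PI ^ 2 / 4.

Lemma HN1 : (1 <= N)%nat. Proof. lia. Qed.

Lemma SS_pos : 0 < SS.
Proof.
  unfold SS. apply sin_gt_0.
  - apply Rmult_lt_0_compat; [apply lt_0_INR; lia| apply xx_pos, HN1].
  - rewrite <- (xx_N N HN1). pose proof (xx_pos N HN1).
    assert (INR (s + 1) < 2 * INR N).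
    { assert (INR (s + 1) < INR N) by (apply lt_INR; lia). pose proof (pos_INR N). lra. }
    nra.
Qed.

Lemma Rc_ge : INR (s + 1) * INR (s + 3) <= Rc * 2 /\ 2 * INR s * INR s <= 1 + Rc.
Proof.
  unfold Rc. pose proof PI2_3_2. rewrite !plus_INR. simpl.
  assert (0 <= INR s) by apply pos_INR.
  assert (9 <= PI ^ 2) by nra.
  split; nra.
Qed.

Lemma sin_le_SS m : (m <= s + 1)%nat -> sin (INR m * xx N) <= SS.
Proof.
  intros Hm. unfold SS. pose proof (xx_pos N HN1). pose proof (xx_N N HN1).
  apply sin_mono.
  - apply Rmult_le_pos; [apply pos_INR|lra].
  - apply Rmult_le_compat_r; [lra|]. apply le_INR; auto.
  - assert (INR (s + 1) <= INR N) by (apply le_INR; lia). nra.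
Qed.

Lemma gap_left j j' : (1 <= j)%nat -> (j < j')%nat -> (j' <= N)%nat -> (j' <= j + s + 1)%nat ->
  let H := (cc N j - cc N j') / 2 in
  H <= SS /\ H * H <= Rc * SS * (cc N (j - 1) - cc N j).
Proof.
  intros H1 H2 H3 H4 H.
  pose proof (xx_pos N HN1) as Hx.
  set (A := sin (INR (j + j') * xx N)).
  set (B := sin (INR (j' - j) * xx N)).
  set (P := sin (INR (2 * j - 1) * xx N)).
  set (Q := sin (xx N)).
  assert (HH : H = A * B).
  { unfold H. rewrite (cc_diff N HN1). unfold A, B. rewrite minus_INR by lia. field. }
  assert (HA0 : 0 <= A) by (apply sin_nonneg; lia).
  assert (HA1 : A <= 1) by apply SIN_bound.
  assert (HB0 : 0 <= B) by (apply sin_nonneg; lia).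
  assert (HBS : B <= SS) by (apply sin_le_SS; lia).
  assert (HQ0 : 0 <= Q) by (unfold Q; replace (xx N) with (INR 1 * xx N) by (simpl; ring); apply sin_nonneg; lia).
  assert (HBQ : B <= (INR s + 1) * Q).
  { eapply Rle_trans; [apply (sin_mul N HN1); lia|].
    apply Rmult_le_compat_r; [exact HQ0|]. replace (INR s + 1) with (INR (s + 1)) by (rewrite plus_INR; simpl; ring).
    apply le_INR; lia. }
  assert (HQP : Q <= P) by (apply sin_ge_xx; lia).
  assert (HAP : A <= (INR s + 3) * P).
  { unfold A. replace (INR (j + j') * xx N) with (INR (2 * j - 1) * xx N + INR (j' - j + 1) * xx N).
    2:{ rewrite !plus_INR, !minus_INR, mult_INR by lia. simpl. ring. }
    eapply Rle_trans; [apply sin_sub; apply sin_nonneg; lia|].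
    assert (sin (INR (j' - j + 1) * xx N) <= INR (j' - j + 1) * Q) by (apply sin_mul; lia).
    assert (INR (j' - j + 1) <= INR s + 2).
    { replace (INR s + 2) with (INR (s + 2)) by (rewrite plus_INR; simpl; ring). apply le_INR; lia. }
    change (sin (INR (2 * j - 1) * xx N)) with P.
    assert (INR (j' - j + 1) * Q <= (INR s + 2) * Q) by (apply Rmult_le_compat_r; lra).
    assert ((INR s + 2) * Q <= (INR s + 2) * P) by (apply Rmult_le_compat_l; pose proof (pos_INR s); lra).
    lra. }
  assert (Hd : cc N (j - 1) - cc N j = 2 * P * Q).
  { rewrite (cc_diff N HN1). unfold P, Q.
    replace (j - 1 + j)%nat with (2 * j - 1)%nat by lia.
    replace ((INR j - INR (j - 1)) * xx N) with (xx N) by (rewrite (minus_INR j 1) by lia; simpl; ring). ring. }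
  destruct Rc_ge as [Rc1 _].
  assert (HRI : (INR s + 1) * (INR s + 3) <= Rc * 2).
  { replace (INR s + 1) with (INR (s + 1)) by (rewrite plus_INR; simpl; ring).
    replace (INR s + 3) with (INR (s + 3)) by (rewrite plus_INR; simpl; ring). exact Rc1. }
  split.
  - rewrite HH. nra.
  - rewrite HH, Hd. pose proof SS_pos.
    assert (0 <= INR s) by apply pos_INR.
    apply Rle_trans with (A * (B * B)).
    { assert (A * A <= A * 1) by (apply Rmult_le_compat_l; lra).
      assert (0 <= B * B) by nra.
      replace (A * B * (A * B)) with ((A * A) * (B * B)) by ring.
      apply Rmult_le_compat_r; lra. }
    apply Rle_trans with ((INR s + 3) * P * (SS * ((INR s + 1) * Q))).
    { apply Rmult_le_compat; [lra|nra|lra|apply Rmult_le_compat; lra]. }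
    assert (0 <= P * Q) by nra.
    assert (0 <= SS * (P * Q)) by nra. nra.
Qed.

Lemma ext_top j : (1 <= j)%nat -> (j <= s)%nat ->
  1 / ((1 + Rc) * SS) <= 1 / (1 - cc N j) - 1 / (1 - cc N (j + 1)).
Proof.
  intros H1 H2. pose proof (xx_pos N HN1) as Hx. pose proof SS_pos as HS.
  set (sj := sin (INR j * xx N)). set (sj' := sin (INR (j + 1) * xx N)).
  set (P := sin (INR (2 * j + 1) * xx N)). set (Q := sin (xx N)).
  assert (E1 : 1 - cc N j = 2 * sj * sj) by apply (cc_sub_one N HN1).
  assert (E2 : 1 - cc N (j + 1) = 2 * sj' * sj') by apply (cc_sub_one N HN1).
  assert (E3 : cc N j - cc N (j + 1) = 2 * P * Q).
  { rewrite (cc_diff N HN1). unfold P, Q. replace (j + (j + 1))%nat with (2 * j + 1)%nat by lia.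
    replace ((INR (j + 1) - INR j) * xx N) with (xx N) by (rewrite plus_INR; simpl; ring). ring. }
  assert (Hsj : 0 < sj).
  { unfold sj. apply sin_gt_0. apply Rmult_lt_0_compat; [apply lt_0_INR; lia|auto].
    rewrite <- (xx_N N HN1). assert (INR j < 2 * INR N).
    { assert (INR j <= INR s) by (apply le_INR; auto). assert (INR s + 2 < INR N).
      { apply lt_INR in HsN. rewrite plus_INR in HsN. simpl in HsN. lra. }
      pose proof (pos_INR s). lra. } nra. }
  assert (Hsj' : 0 < sj').
  { unfold sj'. apply sin_gt_0. apply Rmult_lt_0_compat; [apply lt_0_INR; lia|auto].
    rewrite <- (xx_N N HN1). assert (INR (j + 1) < 2 * INR N).
    { assert (INR (j + 1) < INR N) by (apply lt_INR; lia). pose proof (pos_INR N). lra. } nra. }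
  assert (HQ0 : 0 <= Q) by (unfold Q; replace (xx N) with (INR 1 * xx N) by (simpl; ring); apply sin_nonneg; lia).
  assert (HQP : Q <= P) by (apply sin_ge_xx; lia).
  assert (Hsjq : sj <= INR j * Q) by (apply sin_mul; lia).
  assert (Hsj'S : sj' <= SS) by (apply sin_le_SS; lia).
  assert (Hsj'1 : sj' <= 1) by apply SIN_bound.
  assert (Hj : INR j <= INR s) by (apply le_INR; auto).
  destruct Rc_ge as [_ Rc2].
  assert (Hjj : 2 * INR j * INR j <= 1 + Rc).
  { pose proof (pos_INR j). nra. }
  assert (Hkey : (1 - cc N j) * (1 - cc N (j + 1)) <= (1 + Rc) * SS * (cc N j - cc N (j + 1))).
  { rewrite E1, E2, E3.
    apply Rle_trans with (4 * (INR j * Q) * (INR j * Q) * SS).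
    { assert (sj * sj <= (INR j * Q) * (INR j * Q)) by nra.
      assert (sj' * sj' <= SS) by nra. nra. }
    assert (Q * Q <= P * Q) by nra.
    assert (0 <= Q * Q) by nra.
    assert (2 * INR j * INR j * (Q * Q) <= (1 + Rc) * (P * Q)) by nra.
    nra. }
  assert (Hp1 : 0 < 1 - cc N j) by (rewrite E1; nra).
  assert (Hp2 : 0 < 1 - cc N (j + 1)) by (rewrite E2; nra).
  assert (HR : 0 < 1 + Rc) by (pose proof (pos_INR j); nra).
  replace (1 / (1 - cc N j) - 1 / (1 - cc N (j + 1)))
    with ((cc N j - cc N (j + 1)) / ((1 - cc N j) * (1 - cc N (j + 1)))) by (field; lra).
  apply Rmult_le_reg_r with ((1 + Rc) * SS * ((1 - cc N j) * (1 - cc N (j + 1)))).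
  { apply Rmult_lt_0_compat; [nra|nra]. }
  replace (1 / ((1 + Rc) * SS) * ((1 + Rc) * SS * ((1 - cc N j) * (1 - cc N (j + 1)))))
    with ((1 - cc N j) * (1 - cc N (j + 1))) by (field; nra).
  replace ((cc N j - cc N (j + 1)) / ((1 - cc N j) * (1 - cc N (j + 1))) *
     ((1 + Rc) * SS * ((1 - cc N j) * (1 - cc N (j + 1)))))
    with ((1 + Rc) * SS * (cc N j - cc N (j + 1))) by (field; nra).
  exact Hkey.
Qed.
End Trig2.

Lemma gap_half N s j j' : (s + 2 < N)%nat -> (j < j')%nat -> (j' <= N)%nat -> (j' <= j + s + 1)%nat ->
  (cc N j - cc N j') / 2 <= SS N s.
Proof.
  intros HsN H2 H3 H4.
  assert (HN1 : (1 <= N)%nat) by lia.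
  rewrite (cc_diff N HN1). rewrite <- minus_INR by lia.
  assert (HA1 : sin (INR (j + j') * xx N) <= 1) by apply SIN_bound.
  assert (HB0 : 0 <= sin (INR (j' - j) * xx N)) by (apply sin_nonneg; lia).
  assert (HBS : sin (INR (j' - j) * xx N) <= SS N s) by (apply sin_le_SS; lia).
  assert (HA0 : 0 <= sin (INR (j + j') * xx N)) by (apply sin_nonneg; lia).
  nra.
Qed.

Lemma cc_lt N j j' : (1 <= N)%nat -> (j < j')%nat -> (j' <= N)%nat -> cc N j' < cc N j.
Proof.
  intros HN H1 H2. unfold cc. pose proof (INR_N_pos N HN). pose proof PI_RGT_0.
  assert (INR j < INR j') by (apply lt_INR; auto).
  assert (INR j' <= INR N) by (apply le_INR; auto).
  assert (0 <= INR j) by apply pos_INR.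
  apply cos_decreasing_1.
  - apply Rmult_le_pos; [apply Rmult_le_pos; lra|left; apply Rinv_0_lt_compat; lra].
  - apply Rmult_le_reg_r with (INR N); auto. unfold Rdiv. rewrite Rmult_assoc, Rinv_l by lra. nra.
  - apply Rmult_le_pos; [apply Rmult_le_pos; lra|left; apply Rinv_0_lt_compat; lra].
  - apply Rmult_le_reg_r with (INR N); auto. unfold Rdiv. rewrite Rmult_assoc, Rinv_l by lra. nra.
  - unfold Rdiv. apply Rmult_lt_compat_r; [apply Rinv_0_lt_compat; lra|nra].
Qed.

Lemma cc_le N j j' : (1 <= N)%nat -> (j <= j')%nat -> (j' <= N)%nat -> cc N j' <= cc N j.
Proof.
  intros HN H1 H2. destruct (Nat.eq_dec j j') as [->|]; [lra|]. left. apply cc_lt; auto; lia.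
Qed.

Lemma cc_0 N : cc N 0 = 1.
Proof. unfold cc. simpl. rewrite Rmult_0_l. unfold Rdiv. rewrite Rmult_0_l. apply cos_0. Qed.

Lemma cc_N N : (1 <= N)%nat -> cc N N = -1.
Proof. intros HN. unfold cc. pose proof (INR_N_pos N HN). replace (INR N * PI / INR N) with PI by (field; lra). apply cos_PI. Qed.

Lemma recip_gap p g g0 Hh S R : 0 < p -> p <= Hh -> 0 < g0 -> g0 <= g -> Hh <= S ->
  Hh * Hh <= R * S * g0 -> 0 <= R -> 0 < S ->
  1 / ((1 + R) * S) <= 1 / p - 1 / (p + g).
Proof.
  intros Hp HpH Hg0 Hg HS HH HR HS0.
  assert (Hk : p * (p + g) <= (1 + R) * S * g).
  { assert (p * p <= Hh * Hh) by nra.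
    assert (R * S * g0 <= R * S * g) by (apply Rmult_le_compat_l; nra).
    assert (p * g <= S * g) by nra. nra. }
  replace (1 / p - 1 / (p + g)) with (g / (p * (p + g))) by (field; lra).
  apply Rmult_le_reg_r with ((1 + R) * S * (p * (p + g))). { apply Rmult_lt_0_compat; nra. }
  replace (1 / ((1 + R) * S) * ((1 + R) * S * (p * (p + g)))) with (p * (p + g)) by (field; nra).
  replace (g / (p * (p + g)) * ((1 + R) * S * (p * (p + g)))) with ((1 + R) * S * g) by (field; nra).
  exact Hk.
Qed.

Lemma recip_single p Hh S R : 0 < p -> p <= Hh -> Hh <= S -> 0 <= R -> 0 < S ->
  1 / ((1 + R) * S) <= 1 / p.
Proof.
  intros. apply Rmult_le_reg_r with ((1 + R) * S * p). { apply Rmult_lt_0_compat; nra. }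
  replace (1 / ((1 + R) * S) * ((1 + R) * S * p)) with p by (field; nra).
  replace (1 / p * ((1 + R) * S * p)) with ((1 + R) * S) by (field; nra). nra.
Qed.

Lemma recip_end z A B B' : B < A -> A < z -> z <= 1 -> B <= B' -> B' < A ->
  1 / (1 - A) - 1 / (1 - B') <= 1 / (z - A) - 1 / (z - B).
Proof.
  intros. 
  assert (1 / (1 - B) <= 1 / (1 - B')).
  { apply Rmult_le_reg_r with ((1 - B) * (1 - B')). nra.
    replace (1 / (1 - B) * ((1 - B) * (1 - B'))) with (1 - B') by (field; lra).
    replace (1 / (1 - B') * ((1 - B) * (1 - B'))) with (1 - B) by (field; lra). lra. }
  assert (1 / (1 - A) - 1 / (1 - B) <= 1 / (z - A) - 1 / (z - B)).
  { replace (1 / (1 - A) - 1 / (1 - B)) with ((A - B) / ((1 - A) * (1 - B))) by (field; lra).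
    replace (1 / (z - A) - 1 / (z - B)) with ((A - B) / ((z - A) * (z - B))) by (field; lra).
    unfold Rdiv. apply Rmult_le_compat_l; [lra|].
    apply Rinv_le_contravar; nra. }
  lra.
Qed.

Lemma find_gap (x : nat -> R) n z : (forall i, (i <= n)%nat -> z <> x i) ->
  z < x 0%nat -> x n < z -> exists k, (k < n)%nat /\ x (S k) < z < x k.
Proof.
  intros Hnn H0 Hn.
  assert (Hm : forall m, (m <= n)%nat -> z < x m \/ exists k, (k < m)%nat /\ x (S k) < z < x k).
  { induction m; intros Hm; [left; auto|].
    destruct (IHm ltac:(lia)) as [H|[k [Hk1 Hk2]]].
    - destruct (Rlt_dec z (x (S m))) as [H'|H']; [left; auto|].
      right. exists m. split; [lia|]. split; [|auto].
      assert (z <> x (S m)) by (apply Hnn; auto). lra.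
    - right. exists k. split; [lia|auto]. }
  destruct (Hm n (le_n n)) as [H|H]; [lra|exact H].
Qed.

Section Conc.
Variables (N s : nat) (jj : nat -> nat).
Hypothesis HsN : (s + 2 < N)%nat.
Hypothesis Hjj : forall i, (i < N - s)%nat -> (jj i < jj (S i))%nat.
Hypothesis HjN : (jj (N - s) <= N)%nat.

Let n := (N - s)%nat.
Let HN1 : (1 <= N)%nat. Proof. lia. Qed.

Lemma jj_low i : (i <= n)%nat -> (i <= jj i)%nat.
Proof. induction i; intros; [lia|]. specialize (Hjj i ltac:(unfold n in *; lia)). specialize (IHi ltac:(lia)). lia. Qed.

Lemma jj_up i : (i <= n)%nat -> (jj i + (n - i) <= jj n)%nat.
Proof.
  intros Hi. remember (n - i)%nat as d. revert i Hi Heqd. induction d; intros i Hi Heqd.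
  - replace i with n by lia. lia.
  - specialize (IHd (S i) ltac:(lia) ltac:(lia)). specialize (Hjj i ltac:(unfold n in *; lia)). lia.
Qed.

Lemma jj_mono i j : (i <= j)%nat -> (j <= n)%nat -> (jj i <= jj j)%nat.
Proof.
  intros H1 H2. induction j; [replace i with 0%nat by lia; lia|].
  destruct (Nat.eq_dec i (S j)) as [->|]; [lia|].
  specialize (IHj ltac:(lia) ltac:(lia)). specialize (Hjj j ltac:(unfold n in *; lia)). lia.
Qed.

Definition zz i := cc N (jj i).

Lemma zz_dec i : (i < n)%nat -> zz (S i) < zz i.
Proof.
  intros Hi. unfold zz. apply cc_lt; [exact HN1| |].
  - apply Hjj. unfold n in *; lia.
  - assert (jj (S i) + (n - S i) <= jj n)%nat by (apply jj_up; lia). unfold n in *. lia.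
Qed.

Lemma D_lower z : -1 <= z <= 1 -> (forall i, (i <= n)%nat -> z <> zz i) ->
  1 / ((1 + Rc s) * SS N s) <= Rabs (Dsum zz n z).
Proof.
  intros Hz Hnn.
  assert (HS := SS_pos N s HsN).
  assert (HR : 0 <= Rc s).
  { unfold Rc. pose proof (pos_INR s). pose proof PI_RGT_0. apply Rmult_le_pos; [|lra].
    apply Rmult_le_pos; [nra|]. simpl. nra. }
  assert (Hn1 : (3 <= n)%nat) by (unfold n; lia).
  assert (Hj0 : (jj 0 <= s)%nat).
  { assert (jj 0 + (n - 0) <= jj n)%nat by (apply jj_up; lia). unfold n in *. lia. }
  assert (HjnN : (N - s <= jj n)%nat) by (assert (n <= jj n)%nat by (apply jj_low; lia); unfold n in *; lia).
  destruct (Rlt_dec (zz 0%nat) z) as [Htop|Htop].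
  {
    assert (Hj1 : (1 <= jj 0)%nat).
    { destruct (jj 0) eqn:E; [|lia]. exfalso. unfold zz in Htop. rewrite E, cc_0 in Htop. lra. }
    eapply Rle_trans; [|apply (D_top zz n z zz_dec); [lia|auto]].
    eapply Rle_trans; [apply (ext_top N s HsN (jj 0)); auto|].
    apply recip_end; try lra.
    - apply zz_dec; lia.
    - unfold zz. apply cc_le; auto. assert (jj 0 < jj 1)%nat by (apply Hjj; unfold n in *; lia). lia.
      assert (jj 1 + (n - 1) <= jj n)%nat by (apply jj_up; lia). unfold n in *; lia.
    - unfold zz. apply cc_lt; auto; lia. }
  destruct (Rlt_dec z (zz n)) as [Hbot|Hbot].
  { assert (HjnN1 : (jj n <= N - 1)%nat).
    { destruct (Nat.eq_dec (jj n) N) as [E|]; [|unfold n in *; lia]. exfalso.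
      unfold zz in Hbot. rewrite E, cc_N in Hbot by auto. lra. }
    set (j := (N - jj n)%nat).
    assert (Hj1 : (1 <= j)%nat) by (unfold j; lia).
    assert (Hjs : (j <= s)%nat) by (unfold j; unfold n in *; lia).
    eapply Rle_trans; [|apply (D_bot zz n z zz_dec); [lia|auto]].
    eapply Rle_trans; [apply (ext_top N s HsN j); auto|].
    assert (E1 : zz n = - cc N j).
    { unfold zz, j. rewrite <- (cc_refl N HN1) by lia. f_equal. lia. }
    assert (E2 : - cc N (j + 1) <= zz (n - 1)%nat).
    { unfold zz. rewrite <- (cc_refl N HN1) by lia. apply cc_le; auto.
      assert (jj (n - 1) < jj (S (n - 1)))%nat by (apply Hjj; unfold n in *; lia).
      replace (S (n - 1)) with n in H by lia. unfold j. lia.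
      assert (jj (n - 1) + (n - (n - 1)) <= jj n)%nat by (apply jj_up; lia). lia. }
    assert (zz n < zz (n - 1)%nat) by (replace n with (S (n - 1)) at 1 by lia; apply zz_dec; lia).
    assert (cc N (j + 1) < cc N j) by (apply cc_lt; auto; unfold j; lia).
    (* mirror *)
    pose proof (recip_end (- z) (- zz n) (- zz (n - 1)%nat) (cc N (j + 1))) as HR'.
    rewrite E1 in *.
    replace (1 - - - cc N j) with (1 - cc N j) in HR' by ring.
    replace (- z - - - cc N j) with (- cc N j - z) in HR' by ring.
    replace (- z - - zz (n - 1)%nat) with (zz (n - 1)%nat - z) in HR' by ring.
    apply HR'; lra. }
  assert (z <> zz 0%nat) by (apply Hnn; lia).
  assert (z <> zz n) by (apply Hnn; lia).
  destruct (find_gap zz n z Hnn ltac:(lra) ltac:(lra)) as [k [Hk [Hz1 Hz2]]].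
  destruct (D_gap zz n z zz_dec k Hk (conj Hz1 Hz2)) as [G0 [G1 [G2 G3]]].
  set (j := jj k). set (j' := jj (S k)).
  assert (Hjj' : (j < j')%nat) by (apply Hjj; unfold n in *; lia).
  assert (Hj'N : (j' + (n - S k) <= jj n)%nat) by (apply jj_up; lia).
  assert (Hjk : (k <= j)%nat) by (apply jj_low; lia).
  assert (Hgap : (j' <= j + s + 1)%nat) by (unfold n in *; lia).
  assert (Hj'N' : (j' <= N)%nat) by (unfold n in *; lia).
  set (Hh := (cc N j - cc N j') / 2).
  assert (HhS : Hh <= SS N s) by (apply gap_half; auto).
  replace (k + 1)%nat with (S k) in * by lia.
  destruct (Rle_dec (zz k - z) Hh) as [Hl|Hl].
  - destruct k as [|k'].
    + eapply Rle_trans; [|apply G0; auto].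
      apply (recip_single _ Hh); auto; lra.
    + assert (Hj1 : (1 <= j)%nat) by (unfold j; assert (jj k' < jj (S k'))%nat by (apply Hjj; unfold n in *; lia); lia).
      destruct (gap_left N s HsN j j' Hj1 Hjj' Hj'N' Hgap) as [_ HH].
      fold Hh in HH.
      eapply Rle_trans; [|apply G1; lia].
      replace (S k' - 1)%nat with k' by lia.
      replace (1 / (zz k' - z)) with (1 / ((zz (S k') - z) + (zz k' - zz (S k')))) by (f_equal; ring).
      assert (F1 : cc N j < cc N (j - 1)) by (apply cc_lt; auto; lia).
      assert (F2 : cc N (j - 1) <= cc N (jj k')).
      { apply cc_le; auto. unfold j. assert (jj k' < jj (S k'))%nat by (apply Hjj; unfold n in *; lia). lia.
        assert (jj k' <= jj (S k'))%nat by (apply jj_mono; lia). lia. }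
      assert (F3 : zz (S k') = cc N j) by reflexivity.
      assert (F4 : zz k' = cc N (jj k')) by reflexivity.
      apply (recip_gap _ _ (cc N (j - 1) - cc N j) Hh); auto; lra.
  - assert (Hq : z - zz (S k) <= Hh).
    { unfold zz in *. fold j j' in Hl |- *. unfold Hh in *. lra. }
    destruct (Nat.eq_dec (S k) n) as [E|E].
    + eapply Rle_trans; [|apply G2; auto].
      apply (recip_single _ Hh); auto; lra.
    + assert (Hj'1 : (j' + 1 <= N)%nat).
      { assert (jj (S k) < jj (S (S k)))%nat by (apply Hjj; unfold n in *; lia).
        assert (jj (S (S k)) + (n - S (S k)) <= jj n)%nat by (apply jj_up; lia). unfold j', n in *. lia. }
      destruct (gap_left N s HsN (N - j') (N - j) ltac:(lia) ltac:(lia) ltac:(lia) ltac:(lia)) as [_ HH].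
      rewrite !(cc_refl N HN1) in HH by lia.
      replace (N - j' - 1)%nat with (N - (j' + 1))%nat in HH by lia.
      rewrite (cc_refl N HN1) in HH by lia.
      replace ((- cc N j' - - cc N j) / 2) with Hh in HH by (unfold Hh; field).
      eapply Rle_trans; [|apply G3; lia].
      replace (k + 2)%nat with (S (S k)) by lia.
      replace (1 / (z - zz (S (S k)))) with (1 / ((z - zz (S k)) + (zz (S k) - zz (S (S k))))) by (f_equal; ring).
      replace (- cc N (j' + 1) - - cc N j') with (cc N j' - cc N (j' + 1)) in HH by ring.
      assert (F1 : cc N (j' + 1) < cc N j') by (apply cc_lt; auto; lia).
      assert (F2 : cc N (jj (S (S k))) <= cc N (j' + 1)).
      { apply cc_le; auto. unfold j'. assert (jj (S k) < jj (S (S k)))%nat by (apply Hjj; unfold n in *; lia). lia.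
        assert (jj (S (S k)) + (n - S (S k)) <= jj n)%nat by (apply jj_up; lia). unfold n in *. lia. }
      assert (F3 : zz (S k) = cc N j') by reflexivity.
      assert (F4 : zz (S (S k)) = cc N (jj (S (S k)))) by reflexivity.
      apply (recip_gap _ _ (cc N j' - cc N (j' + 1)) Hh); auto; lra.
Qed.
End Conc.

Lemma node_index_some x m z k : node_index x m z = Some k -> z = x k.
Proof.
  induction m; simpl.
  - destruct (Req_EM_T z (x 0%nat)); intros H; inversion H; subst; auto.
  - destruct (node_index x m z) eqn:E.
    + intros H; inversion H; subst. apply IHm; auto.
    + destruct (Req_EM_T z (x (S m))); intros H; inversion H; subst; auto.
Qed.

Lemma node_index_none x m z : node_index x m z = None -> forall i, (i <= m)%nat -> z <> x i.
Proof.
  induction m; simpl.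
  - destruct (Req_EM_T z (x 0%nat)); intros H; [discriminate|]. intros i Hi. replace i with 0%nat by lia. auto.
  - destruct (node_index x m z) eqn:E; [discriminate|].
    destruct (Req_EM_T z (x (S m))); intros H; [discriminate|].
    intros i Hi. destruct (Nat.eq_dec i (S m)) as [->|]; auto. apply IHm; auto; lia.
Qed.

Lemma alt_ones n : sum_f_R0 (fun i => (-1)^i) n = if Nat.odd n then 0 else 1.
Proof.
  induction n; [simpl; ring|]. rewrite tech5, IHn.
  rewrite Nat.odd_succ. rewrite <- Nat.negb_odd.
  destruct (Nat.odd n) eqn:E; cbv [negb].
  - apply Nat.odd_spec in E. destruct E as [m ->].
    replace (S (2 * m + 1)) with (2 * (m + 1))%nat by lia. rewrite pow_mult.
    replace ((-1)^2) with 1 by ring. rewrite pow1. ring.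
  - assert (Nat.even n = true) by (rewrite <- Nat.negb_odd, E; auto).
    apply Nat.even_spec in H. destruct H as [m ->].
    replace (S (2 * m)) with (2 * m + 1)%nat by lia. rewrite pow_add, pow_mult.
    replace ((-1)^2) with 1 by ring. rewrite pow1. ring.
Qed.

Lemma sum_lin (a e : nat -> R) b D n :
  sum_f_R0 (fun i => - (a i + b * e i) / D) n = - (sum_f_R0 a n + b * sum_f_R0 e n) / D.
Proof. induction n; simpl; [ring|]. rewrite IHn. unfold Rdiv. ring. Qed.

Lemma bary_err (g g1 : R -> R) (x : nat -> R) n z :
  (forall i, (i <= n)%nat -> z <> x i) -> Dsum x n z <> 0 ->
  sum_f_R0 (fun i => ((-1)^i / (z - x i)) / (sum_f_R0 (fun j => (-1)^j / (z - x j)) n) * g (x i)) n - g z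
  = - (sum_f_R0 (fun i => (-1)^i * psi g g1 z (x i)) n + g1 z * sum_f_R0 (fun i => (-1)^i) n) / Dsum x n z.
Proof.
  intros Hnn HD. fold (Dsum x n z).
  set (D := Dsum x n z) in *.
  assert (Hg : g z = sum_f_R0 (fun i => ((-1)^i / (z - x i)) / D * g z) n).
  { rewrite <- (scal_sum _ _ (g z)).
    replace (sum_f_R0 (fun i => (-1) ^ i / (z - x i) / D) n) with (D / D).
    - field; auto.
    - unfold D, Dsum. unfold Rdiv at 1. rewrite Rmult_comm, scal_sum. apply sum_eq. intros; unfold Rdiv; ring. }
  transitivity (sum_f_R0 (fun i => ((-1)^i / (z - x i)) / D * (g (x i) - g z)) n).
  { rewrite Hg at 1. rewrite <- minus_sum. apply sum_eq. intros; ring. }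
  transitivity (sum_f_R0 (fun i => - ((-1)^i * psi g g1 z (x i) + g1 z * (-1)^i) / D) n).
  { apply sum_eq. intros i Hi. unfold psi.
    assert (z - x i <> 0) by (specialize (Hnn i Hi); lra).
    assert (x i - z <> 0) by lra.
    field. auto. }
  apply sum_lin.
Qed.

Theorem theorem8 (K N s : nat) (X : nat -> R) (f : R -> R)
  (jj : nat -> nat) (g1 g2 : R -> R) :
  (1 <= K)%nat ->
  (s + 2 < N)%nat ->
  (forall i, (i < N - s)%nat -> (jj i < jj (S i))%nat) ->
  (jj (N - s) <= N)%nat ->
  (forall z, -1 <= z <= 1 -> is_derive_I (fun t => f (u_enc K X t)) z (g1 z)) ->
  (forall z, -1 <= z <= 1 -> is_derive_I g1 z (g2 z)) ->
  (forall z, -1 <= z <= 1 -> continuous_I g2 z) ->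
  let g := fun t => f (u_enc K X t) in
  let n := (N - s)%nat in
  let zz := fun i => cos (INR (jj i) * PI / INR N) in
  let r := bary zz n (fun i => g (zz i)) in
  let Rc := (INR s + 1) * (INR s + 3) * PI ^ 2 / 4 in
  let C := 2 * (1 + Rc) * sin ((INR s + 1) * PI / (2 * INR N)) in
  forall z, -1 <= z <= 1 ->
    Rabs (r z - g z) <=
      (if Nat.odd (N - s) then C * supnorm g2
       else C * (supnorm g2 + supnorm g1)).
Proof.
  intros HK HsN Hjj HjN Hg Hg1 Hc2 g n zz r Rc0 C z Hz.
  fold g in Hg.
  assert (HN1 : (1 <= N)%nat) by lia.
  set (M1 := supnorm g1). set (M2 := supnorm g2).
  assert (HM1 : forall t, -1 <= t <= 1 -> Rabs (g1 t) <= M1).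
  { destruct (bounded_I g1) as [B HB].
    { intros t Ht. apply (deriv_cont g1 t (g2 t)). apply Hg1; auto. }
    apply (supnorm_ge g1 B HB). }
  assert (HM2 : forall t, -1 <= t <= 1 -> Rabs (g2 t) <= M2).
  { destruct (bounded_I g2 Hc2) as [B HB]. apply (supnorm_ge g2 B HB). }
  assert (HM10 : 0 <= M1) by apply supnorm_nonneg.
  assert (HM20 : 0 <= M2) by apply supnorm_nonneg.
  assert (HS := SS_pos N s HsN).
  assert (HSeq : sin ((INR s + 1) * PI / (2 * INR N)) = SS N s).
  { unfold SS, xx. f_equal. rewrite plus_INR. simpl. pose proof (INR_N_pos N HN1). field. lra. }
  assert (HRc : Rc0 = Rc s) by reflexivity.
  assert (HR : 0 <= Rc s).
  { unfold Rc. pose proof (pos_INR s). pose proof PI_RGT_0. apply Rmult_le_pos; [|lra].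
    apply Rmult_le_pos; [nra|]. simpl. nra. }
  assert (HC : C = 2 * (1 + Rc s) * SS N s) by (unfold C; rewrite HSeq; reflexivity).
  assert (HC0 : 0 <= C) by (rewrite HC; nra).
  assert (Hrhs : 0 <= (if Nat.odd (N - s) then C * M2 else C * (M2 + M1))).
  { destruct (Nat.odd (N - s)); nra. }
  unfold r, bary.
  destruct (node_index zz n z) as [k|] eqn:E.
  { apply node_index_some in E. rewrite <- E. replace (g z - g z) with 0 by ring.
    rewrite Rabs_R0. exact Hrhs. }
  assert (Hnn := node_index_none zz n z E).
  assert (HDl : 1 / ((1 + Rc s) * SS N s) <= Rabs (Dsum zz n z)).
  { apply (D_lower N s jj HsN Hjj HjN z Hz). exact Hnn. }
  assert (HD0 : Dsum zz n z <> 0).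
  { intro H0. rewrite H0, Rabs_R0 in HDl.
    assert (0 < 1 / ((1 + Rc s) * SS N s)) by (apply Rdiv_lt_0_compat; nra). lra. }
  rewrite (bary_err g g1 zz n z Hnn HD0).
  set (Num := sum_f_R0 (fun i => (-1)^i * psi g g1 z (zz i)) n + g1 z * sum_f_R0 (fun i => (-1)^i) n).
  assert (Hbound : forall B, Rabs Num <= B -> Rabs (- Num / Dsum zz n z) <= B * ((1 + Rc s) * SS N s)).
  { intros B HB. unfold Rdiv. rewrite Rabs_mult, Rabs_Ropp, Rabs_inv.
    assert (HDp : 0 < Rabs (Dsum zz n z)) by (apply Rabs_pos_lt; auto).
    assert (Hinv : / Rabs (Dsum zz n z) <= (1 + Rc s) * SS N s).
    { replace ((1 + Rc s) * SS N s) with (/ (1 / ((1 + Rc s) * SS N s))) by (field; nra).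
      apply Rinv_le_contravar; [apply Rdiv_lt_0_compat; nra|auto]. }
    apply Rmult_le_compat; auto; [apply Rabs_pos|left; apply Rinv_0_lt_compat; auto]. }
  assert (Hzzb : forall i, -1 <= zz i <= 1) by (intros; apply COS_bound).
  assert (Hdec : forall i, (i < n)%nat -> zz (S i) < zz i) by (intros i Hi; apply (zz_dec N s jj HsN Hjj HjN); auto).
  assert (Hlip : forall i j, (i <= n)%nat -> (j <= n)%nat ->
     Rabs (psi g g1 z (zz i) - psi g g1 z (zz j)) <= M2 / 2 * Rabs (zz i - zz j)).
  { intros i j Hi Hj. apply (psi_lip g g1 g2 M2 Hg Hg1 HM2); auto; apply not_eq_sym; apply Hnn; auto. }
  assert (Hdec' : forall i, (i < n)%nat -> zz (S i) <= zz i) by (intros i Hi; left; apply Hdec; auto).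
  assert (Hn3 : (3 <= n)%nat) by (unfold n; lia).
  assert (Hspan : zz 0%nat - zz n <= 2) by (pose proof (Hzzb 0%nat); pose proof (Hzzb n); lra).
  assert (Hmono : forall i, (i <= n)%nat -> zz i <= zz 0%nat).
  { intros i Hi. induction i; [lra|]. specialize (IHi ltac:(lia)). specialize (Hdec i ltac:(lia)). lra. }
  change (Nat.odd (N - s)) with (Nat.odd n).
  assert (Halt := alt_ones n).
  destruct (Nat.odd n) eqn:Hodd.
  - apply Nat.odd_spec in Hodd. destruct Hodd as [m Hm].
    assert (Hp := alt_pairs (fun i => psi g g1 z (zz i)) zz (M2 / 2) n ltac:(lra) Hdec' Hlip m ltac:(lia)).
    rewrite <- Hm in Hp.
    assert (HN : Rabs Num <= M2).
    { unfold Num. rewrite Halt, Rmult_0_r, Rplus_0_r.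
      assert (zz n <= zz 0%nat) by (apply Hmono; lia).
      assert (M2 / 2 * (zz 0%nat - zz n) <= M2) by nra. cbv beta in Hp. lra. }
    eapply Rle_trans; [apply Hbound; exact HN|]. rewrite HC. nra.
  - assert (Heven : Nat.even n = true) by (rewrite <- Nat.negb_odd, Hodd; auto).
    apply Nat.even_spec in Heven. destruct Heven as [m Hm].
    assert (Hm1 : (1 <= m)%nat) by lia.
    assert (Hp := alt_pairs (fun i => psi g g1 z (zz i)) zz (M2 / 2) n ltac:(lra) Hdec' Hlip (m - 1) ltac:(lia)).
    replace (2 * (m - 1) + 1)%nat with (n - 1)%nat in Hp by lia.
    assert (HN : Rabs Num <= 2 * M2 + M1).
    { unfold Num. rewrite Halt, Rmult_1_r.
      replace n with (S (n - 1)) at 1 by lia. rewrite tech5. replace (S (n - 1)) with n by lia.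
      assert (Hlast : Rabs ((-1) ^ n * psi g g1 z (zz n)) <= M2).
      { rewrite Rabs_mult, pow_m1_abs, Rmult_1_l.
        eapply Rle_trans; [apply (psi_bound g g1 g2 M2 Hg Hg1 HM2); auto; apply not_eq_sym, Hnn; auto|].
        pose proof (Hzzb n). assert (Rabs (zz n - z) <= 2) by (apply Rabs_le; lra). nra. }
      assert (zz (n - 1)%nat <= zz 0%nat) by (apply Hmono; lia).
      assert (zz n < zz (n - 1)%nat) by (replace n with (S (n - 1)) at 1 by lia; apply Hdec; lia).
      assert (M2 / 2 * (zz 0%nat - zz (n - 1)%nat) <= M2) by nra.
      cbv beta in Hp.
      assert (Rabs (g1 z) <= M1) by (apply HM1; auto).
      eapply Rle_trans; [apply Rabs_triang|].
      eapply Rle_trans; [apply Rplus_le_compat_r, Rabs_triang|]. lra. }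
    eapply Rle_trans; [apply Hbound; exact HN|]. rewrite HC. nra.
Qed.
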